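(* Let $A$ be a $p$-torsion free ring with a ring endomorphism $\phi:A\to A$ satisfying $\phi(a)\equiv a^p\pmod{pA}$ for all $a\in A$, and let $n\ge1$. Regard $W_n(A)$ as an $A$-module via $s_\phi$. Then the map \[ \Psi_n:W_n(A)\to A\oplus\phi_*A\oplus\cdots\oplus\phi^{n-1}_*A, \] \[ (a_0,\dots,a_{n-1})\mapsto\Big(a_0,\ \Delta_1(a_0)+a_1,\ \dots,\ \Delta_{n-1}(a_0)+\Delta_{n-2}(a_1)+\cdots+\Delta_1(a_{n-2})+a_{n-1}\Big) \] is an isomorphism of $A$-modules.
   Context: $W(A)$, $W_n(A)$ are the rings of $p$-typical Witt vectors (of length $n$), with Teichmüller lift $[a]$, Verschiebung $V$ and ghost components $\varphi_m(a_0,a_1,\dots)=\sum_{i=0}^m p^ia_i^{p^{m-i}}$. There is a unique ring map $s_\phi:A\to W(A)$ with $\varphi_m(s_\phi(a))=\phi^m(a)$ for all $m$; its composite with the restriction $W(A)\to W_n(A)$ is also denoted $s_\phi$. Define $\Delta_{W_n}:W_n(A)\to W_{n-1}(A)$ by $V\Delta_{W_n}(\alpha)=\alpha-s_\phi(a_0)$ for $\alpha=(a_0,\dots,a_{n-1})$. For $a\in A$ set $\Delta_0(a)=a$ and, for $s\ge1$, $\Delta_s(a)=\Delta_{W_2}\circ\Delta_{W_3}\circ\cdots\circ\Delta_{W_{s+1}}([a])\in A=W_1(A)$. $\phi^j_*A$ denotes $A$ regarded as an $A$-module via $\phi^j$. *)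

(* Defs.v *)
From HB Require Import structures.
From mathcomp Require Import all_boot all_order all_algebra.
From Stdlib Require Import ClassicalEpsilon.
Set Implicit Arguments. Unset Strict Implicit. Unset Printing Implicit Defensive.
Import GRing.Theory.
Local Open Scope ring_scope.

(* Infinite Witt vectors are sequences nat -> A; W_n(A) is {ffun 'I_n -> A}.
   Ring operations are defined through ghost components: for p-torsion free
   A the ghost map is injective, and the m-th component of the result is the
   unique y with p^m y = (target ghost_m) - sum_{i<m} p^i a_i^{p^(m-i)}. *)
Section Witt.
Variables (A : comPzRingType) (p : nat) (phi : {rmorphism A -> A}).

Definition ghost (a : nat -> A) (m : nat) : A :=
  \sum_(i < m.+1) (p%:R ^+ i) * (a i) ^+ (p ^ (m - i)).

(* a chosen y with x = p^k * y (if any; unique when A is p-torsion free) *)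
Definition pdivk (k : nat) (x : A) : A :=
  epsilon (inhabits 0) (fun y => x = p%:R ^+ k * y).

(* first m+1 components of the Witt vector with ghost components w *)
Fixpoint fg_seq (w : nat -> A) (m : nat) : seq A :=
  match m with
  | 0 => [:: pdivk 0 (w 0%N)]
  | m'.+1 => let s := fg_seq w m' in
      rcons s (pdivk m'.+1 (w m'.+1 -
        \sum_(i < m'.+1) (p%:R ^+ i) * (nth 0 s i) ^+ (p ^ (m'.+1 - i))))
  end.

Definition from_ghost (w : nat -> A) : nat -> A := fun m => nth 0 (fg_seq w m) m.

Definition wadd (a b : nat -> A) := from_ghost (fun m => ghost a m + ghost b m).
Definition wsub (a b : nat -> A) := from_ghost (fun m => ghost a m - ghost b m).
Definition wmul (a b : nat -> A) := from_ghost (fun m => ghost a m * ghost b m).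

Definition teich (a : A) : nat -> A := fun i => if i == 0%N then a else 0.
Definition sphi (a : A) : nat -> A := from_ghost (fun m => iter m phi a).

Definition W (n : nat) := {ffun 'I_n -> A}.
Definition tr (n : nat) (a : nat -> A) : W n := [ffun i : 'I_n => a (nat_of_ord i)].
Definition ext (n : nat) (x : W n) : nat -> A :=
  fun i => if insub i is Some j then x j else 0.

Definition waddn n (x y : W n) : W n := tr n (wadd (ext x) (ext y)).
Definition wmuln n (x y : W n) : W n := tr n (wmul (ext x) (ext y)).
Definition sphin n (a : A) : W n := tr n (sphi a).
Definition teichn n (a : A) : W n := tr n (teich a).

(* Delta_{W_{n+1}} : W_{n+1}(A) -> W_n(A), characterized by
   V (Delta alpha) = alpha - s_phi(a_0); V shifts components by one, so
   Delta alpha is the tail (components 1..n) of alpha - s_phi(a_0). *)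
Definition DeltaW (n : nat) (x : W n.+1) : W n :=
  [ffun i : 'I_n => wsub (ext x) (sphi (x ord0)) i.+1].

Fixpoint Dchain (s : nat) : W s.+1 -> W 1 :=
  match s return W s.+1 -> W 1 with
  | 0 => fun x => x
  | s'.+1 => fun x => @Dchain s' (@DeltaW s'.+1 x)
  end.

Definition Delta (s : nat) (a : A) : A := @Dchain s (teichn s.+1 a) ord0.

Definition Psi (n : nat) (x : W n) : {ffun 'I_n -> A} :=
  [ffun j : 'I_n => \sum_(i < j.+1) Delta (j - i) (ext x i)].

End Witt.

(* Main.v *)
Require Import Defs.
From HB Require Import structures.
From mathcomp Require Import all_boot all_order all_algebra.
From Stdlib Require Import ClassicalEpsilon.
From mathcomp Require Import ring.
Set Implicit Arguments. Unset Strict Implicit. Unset Printing Implicit Defensive.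
Import GRing.Theory.
Local Open Scope ring_scope.

Section Proof.
Variables (A : comPzRingType) (p : nat) (phi : {rmorphism A -> A}).
Hypothesis p_gt0 : (0 < p)%N.
Hypothesis tf : forall a : A, p%:R * a = 0 -> a = 0.
Hypothesis frob : forall a : A, exists b : A, phi a - a ^+ p = p%:R * b.

Local Notation P := (p%:R : A).
Implicit Types (f g w z : nat -> A) (a : A).

Definition dv (k : nat) (z : A) := exists t, z = P ^+ k * t.

Lemma dv0 k : dv k 0. Proof. by exists 0; rewrite mulr0. Qed.
Lemma dvD k x y : dv k x -> dv k y -> dv k (x + y).
Proof. by move=> [t ->] [u ->]; exists (t + u); rewrite mulrDr. Qed.
Lemma dvN k x : dv k x -> dv k (- x).
Proof. by move=> [t ->]; exists (- t); rewrite mulrN. Qed.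
Lemma dvB k x y : dv k x -> dv k y -> dv k (x - y).
Proof. by move=> hx hy; apply: dvD => //; apply: dvN. Qed.
Lemma dvMl k c x : dv k x -> dv k (c * x).
Proof. by move=> [t ->]; exists (c * t); rewrite mulrCA. Qed.
Lemma dvMr k c x : dv k x -> dv k (x * c).
Proof. by move=> h; rewrite mulrC; apply: dvMl. Qed.
Lemma dvP k t : dv k (P ^+ k * t). Proof. by exists t. Qed.
Lemma dvW k l x : (l <= k)%N -> dv k x -> dv l x.
Proof.
by move=> lk [t ->]; exists (P ^+ (k - l) * t); rewrite mulrA -exprD subnKC.
Qed.
Lemma dvM k l x y : dv k x -> dv l y -> dv (k + l) (x * y).
Proof.
by move=> [t ->] [u ->]; exists (t * u); rewrite exprD mulrACA.
Qed.
Lemma dvMP j k x : dv k x -> dv (j + k) (P ^+ j * x).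
Proof. by move=> h; apply: dvM => //; exists 1; rewrite mulr1. Qed.
Lemma dv_sum k n (F : 'I_n -> A) : (forall i, dv k (F i)) -> dv k (\sum_(i < n) F i).
Proof.
move=> h; elim/big_ind: _ => //; [exact: dv0 | by move=> ???; apply: dvD].
Qed.

Lemma tfk k a b : P ^+ k * a = P ^+ k * b -> a = b.
Proof.
elim: k a b => [|k IH] a b; first by rewrite !mul1r.
rewrite exprS -!mulrA => /eqP; rewrite -subr_eq0 -mulrBr => /eqP /tf /eqP.
by rewrite subr_eq0 => /eqP; apply: IH.
Qed.

Lemma dvX1 x y e : dv 1 (x - y) -> dv 1 (x ^+ e - y ^+ e).
Proof. by move=> h; rewrite subrXX; apply: dvMr. Qed.

Lemma dvXp k x y : (0 < k)%N -> dv k (x - y) -> dv k.+1 (x ^+ p - y ^+ p).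
Proof.
move=> k0 h; rewrite subrXX -addn1; apply: dvM => //.
have -> : \sum_(i < p) x ^+ (p.-1 - i) * y ^+ i =
   \sum_(i < p) (x ^+ (p.-1 - i) - y ^+ (p.-1 - i)) * y ^+ i
   + \sum_(i < p) y ^+ (p.-1 - i) * y ^+ i.
  by rewrite -big_split /=; apply: eq_bigr => i _; rewrite mulrBl subrK.
apply: dvD.
  apply: dv_sum => i; apply: dvMr; apply: dvX1; exact: dvW h.
have -> : \sum_(i < p) y ^+ (p.-1 - i) * y ^+ i = \sum_(i < p) y ^+ p.-1.
  apply: eq_bigr => i _; rewrite -exprD subnK //.
  by rewrite -ltnS prednK.
by rewrite sumr_const card_ord -mulr_natl; apply: dvMr; exists 1; rewrite expr1 mulr1.
Qed.

Lemma dvXpj j x y : dv 1 (x - y) -> dv j.+1 (x ^+ (p ^ j) - y ^+ (p ^ j)).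
Proof.
move=> h; elim: j => [|j IH]; first by rewrite expn0 !expr1.
by rewrite expnSr !exprM; apply: dvXp.
Qed.


Lemma frob1 a : dv 1 (phi a - a ^+ p).
Proof. by have [b ->] := frob a; exists b; rewrite expr1. Qed.

Lemma ghost_recr f N : ghost p f N.+1 =
  \sum_(i < N.+1) P ^+ i * f i ^+ (p ^ (N.+1 - i)) + P ^+ N.+1 * f N.+1.
Proof. by rewrite /ghost big_ord_recr /= subnn expn0 expr1. Qed.

Lemma ghost0 f : ghost p f 0 = f 0%N.
Proof. by rewrite /ghost big_ord1 expr0 mul1r subnn expn0 expr1. Qed.

Lemma L4 f N : dv N.+1 (phi (ghost p f N) - \sum_(i < N.+1) P ^+ i * f i ^+ (p ^ (N.+1 - i))).
Proof.
rewrite rmorph_sum -sumrB; apply: dv_sum => i.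
rewrite rmorphM rmorphXn rmorph_nat rmorphXn -mulrBr.
have iN : (i <= N)%N by rewrite -ltnS.
rewrite subSn // expnS exprM.
have e : (i + (N - i).+1)%N = N.+1 by rewrite addnS subnKC.
by apply: (dvW (k := (i + (N - i).+1)%N)); [rewrite e | apply: dvMP; apply: dvXpj; apply: frob1].
Qed.

Definition gl (w : nat -> A) := forall m, dv m.+1 (w m.+1 - phi (w m)).

Lemma gl_ghost f : gl (ghost p f).
Proof.
move=> m; rewrite ghost_recr.
rewrite [_ + P ^+ _ * _]addrC -addrA; apply: dvD; first exact: dvP.
by rewrite -opprB; apply: dvN; apply: L4.
Qed.

Lemma fg_size w m : size (fg_seq p w m) = m.+1.
Proof. by elim: m => [|m IH] //=; rewrite size_rcons IH. Qed.

Lemma fg_nth w m i : (i <= m)%N -> nth 0 (fg_seq p w m) i = from_ghost p w i.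
Proof.
elim: m => [|m IH]; first by rewrite leqn0 => /eqP ->.
rewrite leq_eqVlt => /orP [/eqP -> //|]; rewrite ltnS => im.
by rewrite /= nth_rcons fg_size ltnS im IH.
Qed.

Lemma fgS w m : from_ghost p w m.+1 = pdivk p m.+1
  (w m.+1 - \sum_(i < m.+1) P ^+ i * from_ghost p w i ^+ (p ^ (m.+1 - i))).
Proof.
rewrite {1}/from_ghost /= nth_rcons fg_size ltnn eqxx.
congr pdivk; congr (_ - _); apply: eq_bigr => i _; rewrite fg_nth //.
by rewrite -ltnS.
Qed.

Lemma pdivkE k y : pdivk p k (P ^+ k * y) = y.
Proof.
rewrite /pdivk; set e := epsilon _ _.
have : P ^+ k * y = P ^+ k * e by apply: (epsilon_spec (inhabits 0) (fun y0 => P ^+ k * y = P ^+ k * y0)); exists y.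
by move/tfk.
Qed.

Lemma FG w : gl w -> forall m, ghost p (from_ghost p w) m = w m.
Proof.
move=> hw; elim=> [|m IH].
  rewrite ghost0 /from_ghost /=.
  by rewrite -{1}[w 0%N]mul1r -(expr0 P) pdivkE.
have [t ht] : dv m.+1 (w m.+1 - \sum_(i < m.+1) P ^+ i * from_ghost p w i ^+ (p ^ (m.+1 - i))).
  have -> : w m.+1 - \sum_(i < m.+1) P ^+ i * from_ghost p w i ^+ (p ^ (m.+1 - i)) =
    (w m.+1 - phi (w m)) + (phi (ghost p (from_ghost p w) m) - \sum_(i < m.+1) P ^+ i * from_ghost p w i ^+ (p ^ (m.+1 - i))).
    by rewrite IH addrA subrK.
  by apply: dvD; [apply: hw | apply: L4].
rewrite ghost_recr fgS ht pdivkE -ht.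
by rewrite addrC subrK.
Qed.


Lemma gl_add w z : gl w -> gl z -> gl (fun m => w m + z m).
Proof.
move=> hw hz m /=; rewrite rmorphD opprD addrACA; exact: dvD.
Qed.
Lemma gl_sub w z : gl w -> gl z -> gl (fun m => w m - z m).
Proof.
move=> hw hz m /=; rewrite rmorphB.
have -> : w m.+1 - z m.+1 - (phi (w m) - phi (z m)) = (w m.+1 - phi (w m)) - (z m.+1 - phi (z m)).
  by ring.
exact: dvB.
Qed.
Lemma gl_mul w z : gl w -> gl z -> gl (fun m => w m * z m).
Proof.
move=> hw hz m /=; rewrite rmorphM.
have -> : w m.+1 * z m.+1 - phi (w m) * phi (z m) =
   (w m.+1 - phi (w m)) * z m.+1 + phi (w m) * (z m.+1 - phi (z m)).
  by rewrite mulrBl mulrBr addrA subrK.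
by apply: dvD; [apply: dvMr | apply: dvMl].
Qed.
Lemma gl_iter a : gl (fun m => iter m phi a).
Proof. by move=> m /=; rewrite subrr; apply: dv0. Qed.

Lemma ghost_wadd f g m : ghost p (wadd p f g) m = ghost p f m + ghost p g m.
Proof. by rewrite /wadd FG //; apply: gl_add; apply: gl_ghost. Qed.
Lemma ghost_wsub f g m : ghost p (wsub p f g) m = ghost p f m - ghost p g m.
Proof. by rewrite /wsub FG //; apply: gl_sub; apply: gl_ghost. Qed.
Lemma ghost_wmul f g m : ghost p (wmul p f g) m = ghost p f m * ghost p g m.
Proof. by rewrite /wmul FG //; apply: gl_mul; apply: gl_ghost. Qed.
Lemma ghost_sphi a m : ghost p (sphi p phi a) m = iter m phi a.
Proof. by rewrite /sphi FG //; apply: gl_iter. Qed.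

Lemma ghost_teich a m : ghost p (teich a) m = a ^+ (p ^ m).
Proof.
rewrite /ghost big_ord_recl /= expr0 mul1r subn0 big1 ?addr0 // => i _.
by rewrite /teich /= expr0n expn_eq0 eqn0Ngt p_gt0 /= mulr0.
Qed.

Lemma ghost_eq f g m : (forall i, (i <= m)%N -> f i = g i) -> ghost p f m = ghost p g m.
Proof.
by move=> h; apply: eq_bigr => i _; rewrite h // -ltnS.
Qed.

Lemma ext_lt n (x : W A n) i (H : (i < n)%N) : ext x i = x (Ordinal H).
Proof. by rewrite /ext insubT /=; congr (x _); apply: val_inj. Qed.
Lemma ext_tr n f i : (i < n)%N -> ext (tr n f) i = f i.
Proof. by move=> H; rewrite (ext_lt _ H) /tr ffunE. Qed.

Lemma ghost_ext_tr n f m : (m < n)%N -> ghost p (ext (tr n f)) m = ghost p f m.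
Proof.
by move=> mn; apply: ghost_eq => i im; apply: ext_tr; apply: leq_ltn_trans mn.
Qed.


Lemma gen_unq (T : nat -> nat -> A -> A) :
  (forall m x, T m m x = P ^+ m * x) -> forall N (c c' : nat -> A),
  (forall m, (m < N)%N -> \sum_(k < m.+1) T m k (c k) = \sum_(k < m.+1) T m k (c' k)) ->
  forall k, (k < N)%N -> c k = c' k.
Proof.
move=> hT N c c' h; elim/ltn_ind => k IH kN.
have := h k kN; rewrite !big_ord_recr /= !hT.
rewrite (eq_bigr (fun i : 'I_k => T k i (c' i))); last first.
  by move=> i _ /=; rewrite IH // (ltn_trans _ kN).
by move/addrI/tfk.
Qed.

Lemma it_add k x y : iter k phi (x + y) = iter k phi x + iter k phi y.
Proof. by elim: k => //= k ->; rewrite rmorphD. Qed.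
Lemma it_mul k x y : iter k phi (x * y) = iter k phi x * iter k phi y.
Proof. by elim: k => //= k ->; rewrite rmorphM. Qed.
Lemma it_nat k j : iter k phi (j%:R) = j%:R :> A.
Proof. by elim: k => //= k ->; rewrite rmorph_nat. Qed.
Lemma it_sum k n (F : 'I_n -> A) : iter k phi (\sum_(i < n) F i) = \sum_(i < n) iter k phi (F i).
Proof. by elim: k => //= k ->; rewrite rmorph_sum. Qed.
Lemma it_exp k x e : iter k phi (x ^+ e) = iter k phi x ^+ e.
Proof. by elim: k => //= k ->; rewrite rmorphXn. Qed.

Definition S (c : nat -> A) m := \sum_(k < m.+1) P ^+ k * iter (m - k) phi (c k).

Lemma unqS N c c' : (forall m, (m < N)%N -> S c m = S c' m) -> forall k, (k < N)%N -> c k = c' k.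
Proof.
apply: (gen_unq (T := fun m k x => P ^+ k * iter (m - k) phi x)).
by move=> m x; rewrite subnn.
Qed.

Lemma S_recl c m : S c m.+1 = iter m.+1 phi (c 0%N) + P * S (fun k => c k.+1) m.
Proof.
rewrite /S big_ord_recl /= expr0 mul1r; congr (_ + _).
by rewrite mulr_sumr; apply: eq_bigr => i _; rewrite /= /bump /= add1n exprS subSS mulrA.
Qed.

Lemma S_recr c m : S c m.+1 = phi (S c m) + P ^+ m.+1 * c m.+1.
Proof.
rewrite /S big_ord_recr /= subnn; congr (_ + _).
rewrite rmorph_sum; apply: eq_bigr => i _ /=.
by rewrite rmorphM rmorphXn rmorph_nat subSn // -ltnS.
Qed.

Lemma ghost_DeltaW n (x : W A n.+1) m : (m < n)%N ->
  P * ghost p (ext (DeltaW p phi x)) m = ghost p (ext x) m.+1 - iter m.+1 phi (x ord0).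
Proof.
move=> mn; set z := wsub p (ext x) (sphi p phi (x ord0)).
have z0 : z 0%N = 0.
  rewrite -ghost0 ghost_wsub ghost_sphi ghost0 /= (ext_lt x (ltn0Sn n)).
  by rewrite (_ : Ordinal _ = ord0) ?subrr //; apply: val_inj.
have -> : ghost p (ext (DeltaW p phi x)) m = ghost p (fun i => z i.+1) m.
  apply: ghost_eq => i im; have iH : (i < n)%N by apply: leq_ltn_trans mn.
  by rewrite (ext_lt _ iH) /DeltaW ffunE.
rewrite -ghost_sphi -ghost_wsub -/z.
rewrite [RHS]/ghost big_ord_recl /= z0 expr0n expn_eq0 eqn0Ngt p_gt0 /= mulr0 add0r.
rewrite /ghost mulr_sumr; apply: eq_bigr => i _.
by rewrite /= /bump /= add1n exprS subSS mulrA.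
Qed.

Lemma Dchain_dec s (x : W A s.+1) : exists c, (forall m, (m < s.+1)%N -> ghost p (ext x) m = S c m)
   /\ c s = Dchain p phi x ord0.
Proof.
elim: s x => [|s IH] x.
  exists (fun _ => x ord0); split => // m; rewrite ltnS leqn0 => /eqP ->.
  rewrite ghost0 (ext_lt x (ltn0Sn 0)) /S big_ord1 expr0 mul1r /=.
  by congr (x _); apply: val_inj.
have [c' [h' hc']] := IH (DeltaW p phi x).
exists (fun k => if k is k'.+1 then c' k' else x ord0); split => //.
case=> [|m] mH.
  rewrite ghost0 (ext_lt x (ltn0Sn _)) /S big_ord1 expr0 mul1r /=.
  by congr (x _); apply: val_inj.
rewrite S_recl /= -(h' m mH) ghost_DeltaW //.
by rewrite addrC subrK.
Qed.

Lemma DeltaE a m : a ^+ (p ^ m) = S (fun k => Delta p phi k a) m.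
Proof.
elim/ltn_ind: m => m IH.
have [c [hc hcm]] := Dchain_dec (teichn m.+1 a).
have hc' : forall m', (m' <= m)%N -> a ^+ (p ^ m') = S c m'.
  by move=> m' mm; rewrite -hc // /teichn ghost_ext_tr // ghost_teich.
have ck : forall k, (k <= m)%N -> c k = Delta p phi k a.
  move=> k; rewrite leq_eqVlt => /orP [/eqP ->|]; first by rewrite hcm.
  move=> km; apply: (unqS (N := m) (c := c) (c' := fun k => Delta p phi k a)) km => m' mm; rewrite -IH // -hc' //; exact: ltnW.
rewrite hc' //; apply: eq_bigr => k _; rewrite ck //; by rewrite -ltnS.
Qed.


Definition psi f j := \sum_(i < j.+1) Delta p phi (j - i) (f i).

Lemma GP f m : ghost p f m = S (psi f) m.
Proof.
pose F i j := P ^+ j * iter (m - j) phi (Delta p phi (j - i) (f i)).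
transitivity (\sum_(i < m.+1) \sum_(j < m.+1) (if (i <= j)%N then F i j else 0)).
  apply: eq_bigr => i _; rewrite DeltaE /S mulr_sumr.
  have im : (i <= m)%N by rewrite -ltnS.
  rewrite -big_mkcond /=.
  rewrite (eq_bigr (fun k : 'I_(m - i).+1 => F i (k + i)%N)); last first.
    by move=> k _; rewrite /F mulrA -exprD addnC addnK subnDA subnAC.
  have -> : \sum_(k < (m - i).+1) F i (k + i)%N = \sum_(0 <= k < (m - i).+1) F i (k + i)%N.
    by rewrite big_mkord.
  rewrite -subSn // -(big_addn 0 m.+1 i xpredT (F i)) add0n.
  by rewrite big_geq_mkord.
rewrite exchange_big /S; apply: eq_bigr => j _.
rewrite /psi it_sum mulr_sumr -big_mkcond /=.
rewrite (big_ord_widen m.+1 (fun i => F i j)) //.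
Qed.


Lemma ext_ord n (x : W A n) (i : 'I_n) : ext x i = x i.
Proof. by rewrite (ext_lt x (ltn_ord i)); congr (x _); apply: val_inj. Qed.

Lemma psiE n (x : W A n) (j : 'I_n) : Psi p phi x j = psi (ext x) j.
Proof. by rewrite ffunE. Qed.

Lemma S_add c d m : S (fun k => c k + d k) m = S c m + S d m.
Proof. by rewrite /S -big_split; apply: eq_bigr => k _; rewrite it_add mulrDr. Qed.

Lemma S_scal a c m : S (fun k => iter k phi a * c k) m = iter m phi a * S c m.
Proof.
rewrite /S mulr_sumr; apply: eq_bigr => k _.
rewrite it_mul -iterD subnK; last by rewrite -ltnS.
by rewrite mulrCA.
Qed.

Lemma gl_S c : gl (S c).
Proof. by move=> m; rewrite S_recr addrC addKr; apply: dvP. Qed.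

Lemma Psi_add n (x y : W A n) : Psi p phi (waddn p x y) = Psi p phi x + Psi p phi y.
Proof.
apply/ffunP => j; rewrite !ffunE -!/(psi _ _).
apply: (unqS (N := n) (c' := fun k => psi (ext x) k + psi (ext y) k)) => // m mn.
by rewrite S_add -!GP /waddn ghost_ext_tr // ghost_wadd.
Qed.

Lemma Psi_lin n a (x : W A n) : Psi p phi (wmuln p (sphin p phi n a) x)
   = [ffun j : 'I_n => iter j phi a * Psi p phi x j].
Proof.
apply/ffunP => j; rewrite !ffunE -!/(psi _ _).
apply: (unqS (N := n) (c' := fun k => iter k phi a * psi (ext x) k)) => // m mn.
by rewrite S_scal -!GP /wmuln ghost_ext_tr // ghost_wmul /sphin ghost_ext_tr // ghost_sphi.
Qed.

Lemma Psi_inj n (x y : W A n) : Psi p phi x = Psi p phi y -> x = y.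
Proof.
move=> h; apply/ffunP => i; rewrite -!ext_ord.
have := (gen_unq (T := fun m k v => P ^+ k * v ^+ (p ^ (m - k)))).
move=> /(_ _ n (ext x) (ext y)); apply => //.
  by move=> m v; rewrite subnn expn0 expr1.
move=> m mn; rewrite -/(ghost p (ext x) m) -/(ghost p (ext y) m) !GP.
apply: eq_bigr => k _; congr (_ * _); congr (iter _ phi _).
have kn : (k < n)%N by apply: leq_ltn_trans mn; rewrite -ltnS.
by rewrite -(psiE x (Ordinal kn)) -(psiE y (Ordinal kn)) h.
Qed.

Definition Pinv n (b : {ffun 'I_n -> A}) : W A n := tr n (from_ghost p (S (ext b))).

Lemma Psi_Pinv n (b : {ffun 'I_n -> A}) : Psi p phi (Pinv b) = b.
Proof.
apply/ffunP => j; rewrite psiE -ext_ord.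
apply: (unqS (N := n)) => // m mn.
by rewrite -GP /Pinv ghost_ext_tr // FG //; apply: gl_S.
Qed.

End Proof.

Theorem theorem3p7 (A : comPzRingType) (p : nat) (phi : {rmorphism A -> A})
    (n : nat) :
  prime p ->
  (forall a : A, p%:R * a = 0 -> a = 0) ->
  (forall a : A, exists b : A, phi a - a ^+ p = p%:R * b) ->
  (0 < n)%N ->
  [/\ (forall x y : W A n,
         Psi p phi (waddn p x y) = Psi p phi x + Psi p phi y),
      (forall (a : A) (x : W A n),
         Psi p phi (wmuln p (sphin p phi n a) x)
           = [ffun j : 'I_n => iter j phi a * Psi p phi x j])
    & bijective (Psi p phi (n:=n))].
Proof.
move=> pr tf frob _; have p0 := prime_gt0 pr.
split.
- by move=> x y; apply: Psi_add.
- by move=> a x; apply: Psi_lin.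
- exists (@Pinv A p phi n) => x; last by apply: Psi_Pinv.
  by apply: (Psi_inj p0 tf frob); rewrite Psi_Pinv.
Qed.
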